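(* Let $H=(E,\{X_i:i\in[n]\})$ be a hypergraph such that $|X_i\cap X_j|\le1$ for all distinct $i,j\in[n]$, and such that there are no $a,b,c\in E$ with $\{a,b\},\{a,c\},\{b,c\}$ all hyperedges. Let $\rho(A)=\sum_{i=1}^n\min\{|A\cap X_i|,1\}$ for $A\subseteq E$. Fix an integer $s$ with $\max\{\rho(A): A\subseteq E,\ |A|\le4\}\le s<\rho(E)$. If the truncation $T(\rho,s)$ is $k$-decomposable, then there is a proper $k$-coloring $c$ of the line graph $G_H$ with $s\ge c_1+2c_2^+$. If $s<\chi(G_H)$, then $T(\rho,s)$ is indecomposable.
   Context: A polymatroid on a finite set $E$ is a function $\rho:2^E\to\mathbb{Z}$ that is normalized, non-decreasing and submodular. A hypergraph is $H=(E,\mathcal{E})$ with $E$ finite and $\mathcal{E}=\{X_i:i\in[n]\}$ a set of nonempty subsets of $E$. The line graph $G_H$ has vertex set $[n]$ with $ij$ an edge iff $i\ne j$ and $X_i\cap X_j\ne\emptyset$. The truncation $T(\rho,s)$ is the polymatroid $X\mapsto\min\{\rho(X),s\}$. A polymatroid is $k$-decomposable if it equals $r_{M_1}+\cdots+r_{M_k}$ for matroids $M_1,\dots,M_k$ on its ground set, and indecomposable if it is not $k$-decomposable for any $k$. For a proper coloring $c:[n]\to[k]$, $c_1$ (resp. $c_2^+$) is the number of $i\in[k]$ with $|c^{-1}(i)|=1$ (resp. $\ge2$). *)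

(* Defs.v *)
From mathcomp Require Import all_boot all_order.
Set Implicit Arguments. Unset Strict Implicit. Unset Printing Implicit Defensive.

Section Defs.
Variable E : finType.

(* Polymatroid on E (nat-valued; the polymatroids in this statement are nonnegative). *)
Definition is_polymatroid (f : {set E} -> nat) : Prop :=
  [/\ f set0 = 0,
      (forall A B : {set E}, A \subset B -> f A <= f B) &
      (forall A B : {set E}, f (A :|: B) + f (A :&: B) <= f A + f B)].

Definition is_matroid_rank (r : {set E} -> nat) : Prop :=
  is_polymatroid r /\ (forall A : {set E}, r A <= #|A|).

Definition truncation (rho : {set E} -> nat) (s : nat) : {set E} -> nat :=
  fun X => minn (rho X) s.

Definition decomposable (f : {set E} -> nat) (k : nat) : Prop :=
  exists M : 'I_k -> {set E} -> nat,
    (forall i, is_matroid_rank (M i)) /\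
    (forall A : {set E}, f A = \sum_(i < k) M i A).

Definition indecomposable (f : {set E} -> nat) : Prop :=
  forall k, ~ decomposable f k.

Variable n : nat.
Variable X : 'I_n -> {set E}.

Definition hrho (A : {set E}) : nat := \sum_(i < n) minn #|A :&: X i| 1.

Definition line_adj (i j : 'I_n) : bool := (i != j) && (X i :&: X j != set0).

Definition proper_coloring (k : nat) (c : 'I_n -> 'I_k) : Prop :=
  forall i j, line_adj i j -> c i != c j.

Definition c1 (k : nat) (c : 'I_n -> 'I_k) : nat :=
  #|[set t : 'I_k | #|[set i | c i == t]| == 1]|.

Definition c2plus (k : nat) (c : 'I_n -> 'I_k) : nat :=
  #|[set t : 'I_k | 2 <= #|[set i | c i == t]|]|.

Definition colorable (k : nat) : bool :=
  [exists c : {ffun 'I_n -> 'I_k}, [forall i, forall j, line_adj i j ==> (c i != c j)]].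

(* chromatic number of the line graph (n colours always suffice) *)
Definition chi_line : nat := \big[minn/n]_(k < n.+1 | colorable k) k.

End Defs.

(* Main.v *)
Require Import Defs.
From mathcomp Require Import all_boot all_order.
From mathcomp Require Import zify.
Set Implicit Arguments. Unset Strict Implicit. Unset Printing Implicit Defensive.


Section Mat.
Variable E : finType.
Variable r : {set E} -> nat.
Hypothesis hr : is_matroid_rank r.

Lemma r0 : r set0 = 0. Proof. by case: hr => [[]]. Qed.
Lemma rmono (A B : {set E}) : A \subset B -> r A <= r B. Proof. by case: hr => [[_ h _]] _; apply: h. Qed.
Lemma rsubm (A B : {set E}) : r (A :|: B) + r (A :&: B) <= r A + r B. Proof. by case: hr => [[_ _ h]]. Qed.
Lemma rcard (A : {set E}) : r A <= #|A|. Proof. by case: hr. Qed.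
Lemma r1 x : r [set x] <= 1. Proof. by have := rcard [set x]; rewrite cards1. Qed.
Lemma rU (A B : {set E}) : r (A :|: B) <= r A + r B.
Proof. have := rsubm A B; lia. Qed.

Definition sing (A : {set E}) := \sum_(x in A) r [set x].

Lemma sing_U1 x (A : {set E}) : x \notin A -> sing (x |: A) = r [set x] + sing A.
Proof. by move=> h; rewrite /sing big_setU1. Qed.
Lemma sing1 x : sing [set x] = r [set x].
Proof. by rewrite /sing big_set1. Qed.
Lemma sing0 : sing set0 = 0.
Proof. by rewrite /sing big_set0. Qed.

Lemma sing_U1le x (A : {set E}) : sing (x |: A) <= 1 + sing A.
Proof.
case: (boolP (x \in A)) => h; first by rewrite (setUidPr _) ?sub1set //; lia.
rewrite sing_U1 //; have := r1 x; lia.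
Qed.

Lemma sing_mod (A B : {set E}) : sing (A :|: B) + sing (A :&: B) = sing A + sing B.
Proof.
rewrite /sing (@big_setID _ _ _ _ (A :|: B) A) (@big_setID _ _ _ _ B A) /=.
have -> : (A :|: B) :&: A = A by apply/setP=> z; rewrite !inE; case: (z \in A); case: (z \in B).
have -> : (A :|: B) :\: A = B :\: A by apply/setP=> z; rewrite !inE; case: (z \in A); case: (z \in B).
have -> : B :&: A = A :&: B by rewrite setIC.
lia.
Qed.

Lemma rsing (A : {set E}) : r A <= sing A.
Proof.
elim: {A}_.+1 {-2}A (ltnSn #|A|) => // m IH A hA.
case: (set_0Vmem A) => [->|[x hx]]; first by rewrite r0.
rewrite -(setD1K hx) sing_U1 ?setD11 //.
have := rU [set x] (A :\ x).
have := IH (A :\ x).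
rewrite (cardsD1 x A) hx in hA.
have : #|A :\ x| < m by lia.
move=> h1 h2; have := h2 h1; lia.
Qed.

Definition dfc (A : {set E}) := sing A - r A.

Lemma dfcE (A : {set E}) : dfc A + r A = sing A.
Proof. rewrite /dfc; have := rsing A; lia. Qed.

Lemma dfc_super (A B : {set E}) : dfc A + dfc B <= dfc (A :|: B) + dfc (A :&: B).
Proof.
have := dfcE A; have := dfcE B; have := dfcE (A :|: B); have := dfcE (A :&: B).
have := sing_mod A B; have := rsubm A B; lia.
Qed.

Lemma dfc_mono (A B : {set E}) : A \subset B -> dfc A <= dfc B.
Proof.
move=> sAB.
have eB : A :|: (B :\: A) = B by apply/setP=> z; rewrite !inE; move/subsetP: sAB => /(_ z); case: (z \in A); case: (z \in B) => // /(_ isT).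
have eI : A :&: (B :\: A) = set0 by apply/setP=> z; rewrite !inE; case: (z \in A); case: (z \in B).
have := sing_mod A (B :\: A); rewrite eB eI sing0.
have := rU A (B :\: A); rewrite eB.
have := rsing (B :\: A).
have := dfcE A; have := dfcE B; lia.
Qed.

Lemma dfc_U1 x (A : {set E}) : dfc (x |: A) <= dfc A + 1.
Proof.
have := sing_U1le x A; have := rmono (subsetUr [set x] A).
have := dfcE A; have := dfcE (x |: A); lia.
Qed.

Lemma dfc_U1_par x (A : {set E}) : x \notin A -> r [set x] = 1 -> r (x |: A) <= r A ->
  dfc A + 1 <= dfc (x |: A).
Proof.
move=> hx h1 h2; have := sing_U1 hx; have := dfcE A; have := dfcE (x |: A); lia.
Qed.

Lemma Lpar y z (A : {set E}) : y \in A -> r [set y; z] <= r [set y] -> r (z |: A) <= r A.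
Proof.
move=> hy h.
have := rsubm A [set y; z].
have s1 : z |: A \subset A :|: [set y; z].
  by apply/subsetP=> u; rewrite !inE; case/orP=> ->; rewrite ?orbT.
have s2 : [set y] \subset A :&: [set y; z].
  by apply/subsetP=> u; rewrite !inE => /eqP->; rewrite hy eqxx.
have := rmono s1; have := rmono s2; lia.
Qed.

Definition par x y := [&& r [set x] == 1, r [set y] == 1 & r [set x; y] == 1].

Lemma par_sym x y : par x y -> par y x.
Proof. by rewrite /par setUC => /and3P[-> -> ->]. Qed.

Lemma par_refl x y : par x y -> par x x.
Proof. by rewrite /par setUid => /and3P[/eqP-> _ _]. Qed.

Lemma par_trans x y z : par x y -> par y z -> par x z.
Proof.
move=> /and3P[/eqP hx /eqP hy /eqP hxy] /and3P[_ /eqP hz /eqP hyz].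
rewrite /par hx hz eqxx /=.
have := rsubm [set x; y] [set y; z].
have s1 : [set x; z] \subset [set x; y] :|: [set y; z].
  by apply/subsetP=> u; rewrite !inE; case/orP=> ->; rewrite ?orbT.
have s2 : [set y] \subset [set x; y] :&: [set y; z].
  by apply/subsetP=> u; rewrite !inE => /eqP->; rewrite !eqxx !orbT.
have s3 : [set x] \subset [set x; z] by rewrite sub1set !inE eqxx.
have := rmono s1; have := rmono s2; have := rmono s3; lia.
Qed.

Lemma dfc_pair x y : x != y -> dfc [set x; y] + r [set x; y] = r [set x] + r [set y].
Proof.
by move=> hxy; rewrite dfcE sing_U1 ?sing1 // inE.
Qed.

Lemma dfc_pair_le1 x y : x != y -> dfc [set x; y] <= 1.
Proof.
move=> hxy; have := dfc_pair hxy.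
have := rmono (A:=[set x]) (B:=[set x; y]); rewrite sub1set !inE eqxx => /(_ isT).
have := r1 y; lia.
Qed.

Lemma par_dfc x y : x != y -> par x y = (0 < dfc [set x; y]).
Proof.
move=> hxy; have := dfc_pair hxy.
have := rmono (A:=[set x]) (B:=[set x; y]); rewrite sub1set !inE eqxx => /(_ isT).
have := rmono (A:=[set y]) (B:=[set x; y]); rewrite sub1set !inE eqxx orbT => /(_ isT).
have := r1 y; have := r1 x; rewrite /par.
case: (r [set x]) => [|[|?]]; case: (r [set y]) => [|[|?]]; case: (r [set x; y]) => [|[|?]] //=; lia.
Qed.

End Mat.


Lemma sum_ind (T : finType) (P : pred T) : \sum_(i : T) (P i : nat) = #|[set i | P i]|.
Proof.
rewrite -sum1_card [RHS]big_mkcond /=; apply: eq_bigr => i _; rewrite inE; by case: (P i).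
Qed.

Lemma sumTI (T : finType) (S A : {set T}) : \sum_(x in S) (x \in A : nat) = #|S :&: A|.
Proof.
rewrite -sum1_card [RHS]big_mkcond [LHS]big_mkcond /=; apply: eq_bigr => i _.
by rewrite !inE; case: (i \in S); case: (i \in A).
Qed.

Lemma card1I (T : finType) (x : T) (A : {set T}) : #|[set x] :&: A| = (x \in A).
Proof.
case: (boolP (x \in A)) => h.
  by rewrite (setIidPl _) ?cards1 // sub1set.
have -> : [set x] :&: A = set0.
  by apply/setP => z; rewrite !inE; case: eqP => // ->; rewrite (negbTE h).
by rewrite cards0.
Qed.

Lemma sum2 m (F : 'I_m -> nat) p q : p != q -> F p + F q <= \sum_i F i.
Proof.
move=> hpq; rewrite (bigD1 p) //= (bigD1 q) /=; last by rewrite eq_sym.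
lia.
Qed.

Lemma sum3 m (F : 'I_m -> nat) p q r : p != q -> p != r -> q != r ->
  F p + F q + F r <= \sum_i F i.
Proof.
move=> hpq hpr hqr; rewrite (bigD1 p) //= (bigD1 q) /=; last by rewrite eq_sym.
rewrite (bigD1 r) /=; last by rewrite !(eq_sym r) hqr hpr.
lia.
Qed.

Lemma sum1 m (F : 'I_m -> nat) p : F p <= \sum_i F i.
Proof. by rewrite (bigD1 p) //=; lia. Qed.

Lemma sum_pos_ex m (F : 'I_m -> nat) : 0 < \sum_i F i -> exists i, 0 < F i.
Proof.
case: (pickP (fun i => 0 < F i)) => [i hi|h0]; first by exists i.
by rewrite big1 // => i _; have := h0 i; case: (F i).
Qed.

Lemma cardU1le (T : finType) (x : T) (A : {set T}) : #|x |: A| <= #|A|.+1.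
Proof. rewrite cardsU1; case: (x \notin A) => /=; lia. Qed.

Section Hyp.
Variable E : finType.
Variable n : nat.
Variable X : 'I_n -> {set E}.
Variable k : nat.
Variable M : 'I_k -> {set E} -> nat.
Hypothesis hne : forall i, X i != set0.
Hypothesis hinj : injective X.
Hypothesis hint : forall i j : 'I_n, i != j -> #|X i :&: X j| <= 1.
Hypothesis htri : ~ (exists a b c : E, [/\ a != b, a != c, b != c &
        [/\ exists i, X i = [set a; b], exists i, X i = [set a; c] &
            exists i, X i = [set b; c]]]).
Hypothesis hM : forall i, is_matroid_rank (M i).
Hypothesis hkey : forall A : {set E}, #|A| <= 4 -> \sum_(i < k) M i A = hrho X A.

Definition H (T : {set E}) := \sum_(j < n) (#|T :&: X j| - 1).
Definition Md i := dfc (M i).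
Definition pr i := par (M i).

Lemma Lint2 j l (x y : E) : j != l -> x \in X j -> x \in X l -> y \in X j -> y \in X l -> x = y.
Proof.
move=> hjl h1 h2 h3 h4; apply/eqP/negPn/negP => hxy.
have := hint hjl.
have : [set x; y] \subset X j :&: X l.
  by apply/subsetP => z; rewrite !inE; case/orP => /eqP ->; rewrite ?h1 ?h2 ?h3 ?h4.
move/subset_leq_card; rewrite cards2 hxy; lia.
Qed.

Lemma pair_uniq (x y : E) : x != y -> \sum_j ((x \in X j) && (y \in X j) : nat) <= 1.
Proof.
move=> hxy; rewrite sum_ind leqNgt; apply/negP => /card_gt1P [j [l [hj hl hjl]]].
move: hj hl; rewrite !inE => /andP[h1 h3] /andP[h2 h4].
by move: hxy; rewrite (Lint2 hjl h1 h2 h3 h4) eqxx.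
Qed.

Lemma cardI (x : E) (T : {set E}) j : x \notin T -> #|(x |: T) :&: X j| = (x \in X j) + #|T :&: X j|.
Proof.
move=> hx; case: (boolP (x \in X j)) => h.
  have -> : (x |: T) :&: X j = x |: (T :&: X j).
    by apply/setP => z; rewrite !inE; case: (eqVneq z x) => [->|] //=; rewrite h.
  by rewrite cardsU1 inE (negbTE hx).
have -> : (x |: T) :&: X j = T :&: X j.
  by apply/setP => z; rewrite !inE; case: (eqVneq z x) => [->|] //=; rewrite (negbTE h) andbF.
by [].
Qed.

Lemma GH (x : E) (T : {set E}) : x \notin T -> H (x |: T) <= H T + #|T|.
Proof.
move=> hx.
have step1 : H (x |: T) <= H T + \sum_j ((x \in X j) && (0 < #|T :&: X j|) : nat).
  rewrite /H -big_split /=; apply: leq_sum => j _; rewrite cardI //.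
  case: (x \in X j); case: #|T :&: X j| => //=; lia.
have step2 : \sum_j ((x \in X j) && (0 < #|T :&: X j|) : nat)
     <= \sum_j \sum_(y in T) ((x \in X j) && (y \in X j) : nat).
  apply: leq_sum => j _.
  case: (boolP ((x \in X j) && (0 < #|T :&: X j|))) => //= /andP[hxj /card_gt0P [y]].
  rewrite inE => /andP[hyT hyj].
  by rewrite (bigD1 y) //= hxj hyj /=; lia.
rewrite exchange_big /= in step2.
have step3 : \sum_(y in T) \sum_j ((x \in X j) && (y \in X j) : nat) <= \sum_(y in T) 1.
  apply: leq_sum => y hy; apply: pair_uniq.
  by apply/negP => /eqP hxy; move: hx; rewrite hxy hy.
rewrite sum1_card in step3.
apply: leq_trans step1 _; rewrite leq_add2l; apply: leq_trans step2 _; exact: step3.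
Qed.

Lemma H1 (x : E) : H [set x] = 0.
Proof.
rewrite /H big1 // => j _; have := subset_leq_card (subsetIl [set x] (X j)).
rewrite cards1; lia.
Qed.

Lemma Hpair (x y : E) : x != y -> H [set x; y] <= 1.
Proof.
move=> hxy; have := GH (x := x) (T := [set y]); rewrite inE hxy H1 cards1 => /(_ isT).
by [].
Qed.

Lemma Hsub (T : {set E}) m : T \subset X m -> H T <= #|T| - 1.
Proof.
move=> sT; rewrite /H (bigD1 m) //= (setIidPl sT) big1 ?addn0 // => j hj.
have : T :&: X j \subset X m :&: X j by apply: setSI.
move/subset_leq_card; have := hint (i := m) (j := j); rewrite eq_sym hj => /(_ isT).
lia.
Qed.

Lemma Hterm (x y : E) (T : {set E}) j : x != y -> x \in T -> y \in T -> x \in X j -> y \in X j ->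
  1 <= #|T :&: X j| - 1.
Proof.
move=> hxy h1 h2 h3 h4.
have : [set x; y] \subset T :&: X j.
  by apply/subsetP => z; rewrite !inE; case/orP => /eqP ->; rewrite ?h1 ?h2 ?h3 ?h4.
move/subset_leq_card; rewrite cards2 hxy; lia.
Qed.

Lemma KEY (T : {set E}) : #|T| <= 4 -> \sum_i Md i T = H T.
Proof.
move=> hT.
have e1 : \sum_i sing (M i) T = \sum_j #|T :&: X j|.
  rewrite /sing exchange_big /=.
  transitivity (\sum_(x in T) \sum_j (x \in X j : nat)).
    apply: eq_bigr => x _; rewrite hkey ?cards1 // /hrho.
    by apply: eq_bigr => j _; rewrite card1I; case: (x \in X j).
  by rewrite exchange_big /=; apply: eq_bigr => j _; rewrite sumTI.
have e2 : \sum_i M i T = \sum_j minn #|T :&: X j| 1 by rewrite hkey.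
rewrite /Md /dfc sumnB; last by move=> i _; apply: rsing.
rewrite e1 e2 /H -sumnB; last by move=> j _; apply: geq_minl.
by apply: eq_bigr => j _; lia.
Qed.

Lemma Hex (T : {set E}) : 0 < H T -> exists j, 1 < #|T :&: X j|.
Proof.
move/sum_pos_ex => [j hj]; exists j; lia.
Qed.

Lemma parex (x y : E) m : x != y -> x \in X m -> y \in X m -> exists i, pr i x y.
Proof.
move=> hxy hx hy.
have h1 := Hterm hxy (setU11 x [set y]) (setU1r x (set11 y)) hx hy.
have : 0 < \sum_i Md i [set x; y].
  rewrite KEY; last by rewrite cards2; case: (x != y).
  have := sum1 (fun j => #|[set x; y] :&: X j| - 1) m; rewrite /H /=; lia.
move/sum_pos_ex => [i hi]; exists i; rewrite /pr par_dfc //.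
Qed.

Lemma par_common (x y : E) i : x != y -> pr i x y -> exists m, x \in X m /\ y \in X m.
Proof.
move=> hxy; rewrite /pr par_dfc // => hi.
have : 0 < H [set x; y].
  rewrite -KEY; last by rewrite cards2; case: (x != y).
  have := sum1 (fun i => Md i [set x; y]) i; rewrite /Md /=; lia.
move/Hex => [m hm]; exists m.
have := cardI m (T := [set y]) (x := x); rewrite card1I inE hxy => /(_ isT).
case: (x \in X m); case: (y \in X m) => //=; lia.
Qed.

Lemma par_uniq (x y : E) i b : x != y -> pr i x y -> pr b x y -> i = b.
Proof.
move=> hxy; rewrite /pr !par_dfc // => hi hb.
apply/eqP/negPn/negP => hib.
have := sum2 (fun i => Md i [set x; y]) hib; rewrite KEY; last by rewrite cards2; case: (x != y).
have := Hpair hxy; rewrite /Md /=; lia.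
Qed.

End Hyp.


Ltac neqs := repeat match goal with
  | H : is_true (?a != ?b) |- context [?a == ?b] => rewrite (negbTE H)
  | H : is_true (?a != ?b) |- context [?b == ?a] => rewrite [b == a]eq_sym (negbTE H)
  end.

Ltac ssub := apply/subsetP; let z := fresh "zz" in intro z; rewrite !inE;
  repeat (match goal with |- context [?t] => match t with ?x == ?a => constr_eq x z;
     let e := fresh "e" in case e: t; [move/eqP: e => e; subst z | ] end end);
  rewrite /= ?eqxx; neqs; rewrite /= ?orbT ?orbF ?andbF ?andbT //.
Lemma sum_split m (F : 'I_m -> nat) a : \sum_i F i = F a + \sum_(c | c != a) F c.
Proof. by rewrite (bigD1 a). Qed.

Lemma sum_rest m (F : 'I_m -> nat) a b : b != a -> F b <= \sum_(c | c != a) F c.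
Proof. move=> hb; rewrite (bigD1 b) //=; lia. Qed.

Lemma other (T : finType) (A : {set T}) e : 1 < #|A| -> exists f, f \in A /\ f != e.
Proof.
case/card_gt1P => x [y [hx hy hxy]].
case: (eqVneq x e) => [exe|hxe]; last by exists x.
by exists y; split => //; rewrite -exe eq_sym.
Qed.

Lemma third (T : finType) (A : {set T}) x y : 2 < #|A| -> exists h, [/\ h \in A, h != x & h != y].
Proof.
move=> hA.
have : 0 < #|A :\: [set x; y]|.
  rewrite cardsD; have := subset_leq_card (subsetIr A [set x; y]).
  have := cardU1le x [set y]; rewrite cards1; lia.
case/card_gt0P => h; rewrite !inE negb_or => /andP[/andP[h1 h2] h3].
by exists h.
Qed.

Lemma two (T : finType) (A : {set T}) x y : #|A| <= 2 -> x != y -> x \in A -> y \in A -> A = [set x; y].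
Proof.
move=> hA hxy hx hy; apply/eqP; rewrite eq_sym eqEcard cards2 hxy hA andbT.
by apply/subsetP => z; rewrite !inE; case/orP => /eqP ->.
Qed.

Lemma arith k (F1 F2 F3 FS F0 P1 P2 P3 : 'I_k -> nat) a :
  3 <= \sum_b F1 b -> 3 <= \sum_b F2 b -> 3 <= \sum_b F3 b -> \sum_b FS b <= 5 ->
  \sum_b F0 b <= 2 -> \sum_b P1 b <= 1 -> \sum_b P2 b <= 1 -> \sum_b P3 b <= 1 ->
  1 <= P1 a -> 1 <= P2 a -> 1 <= P3 a -> 2 <= F0 a ->
  (forall b, F1 b + F2 b <= FS b + P1 b) -> (forall b, F1 b + F3 b <= FS b + P2 b) ->
  (forall b, F2 b + F3 b <= FS b + P3 b) -> (forall b, FS b <= F0 b + 1) -> False.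
Proof.
move=> s1 s2 s3 sS s0 q1 q2 q3 a1 a2 a3 a0 h12 h13 h23 hS.
rewrite (sum_split F1 a) in s1; rewrite (sum_split F2 a) in s2; rewrite (sum_split F3 a) in s3.
rewrite (sum_split FS a) in sS; rewrite (sum_split F0 a) in s0; rewrite (sum_split P1 a) in q1.
rewrite (sum_split P2 a) in q2; rewrite (sum_split P3 a) in q3.
have z1 : forall b, b != a -> P1 b = 0.
  by move=> b hb; have := sum_rest P1 hb; lia.
have z2 : forall b, b != a -> P2 b = 0.
  by move=> b hb; have := sum_rest P2 hb; lia.
have z3 : forall b, b != a -> P3 b = 0.
  by move=> b hb; have := sum_rest P3 hb; lia.
have z0 : forall b, b != a -> F0 b = 0.
  by move=> b hb; have := sum_rest F0 hb; lia.
have hR : \sum_(b | b != a) (F1 b + F2 b + F3 b) <= \sum_(b | b != a) FS b.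
  apply: leq_sum => b hb.
  have := h12 b; have := h13 b; have := h23 b; have := hS b.
  rewrite (z1 _ hb) (z2 _ hb) (z3 _ hb) (z0 _ hb); lia.
rewrite !big_split /= in hR.
have := h12 a; have := h13 a; have := h23 a; have := hS a.
move: s1 s2 s3 sS s0 q1 q2 q3 hR.
set x1 := \sum_(b | b != a) F1 b.
set x2 := \sum_(b | b != a) F2 b.
set x3 := \sum_(b | b != a) F3 b.
set xS := \sum_(b | b != a) FS b.
set x0 := \sum_(b | b != a) F0 b.
set y1 := \sum_(b | b != a) P1 b.
set y2 := \sum_(b | b != a) P2 b.
set y3 := \sum_(b | b != a) P3 b.
clearbody x1 x2 x3 xS x0 y1 y2 y3; lia.
Qed.

Section Hyp3.
Variable E : finType.
Variable n : nat.
Variable X : 'I_n -> {set E}.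
Variable k : nat.
Variable M : 'I_k -> {set E} -> nat.
Hypothesis hne : forall i, X i != set0.
Hypothesis hinj : injective X.
Hypothesis hint : forall i j : 'I_n, i != j -> #|X i :&: X j| <= 1.
Hypothesis htri : ~ (exists a b c : E, [/\ a != b, a != c, b != c &
        [/\ exists i, X i = [set a; b], exists i, X i = [set a; c] &
            exists i, X i = [set b; c]]]).
Hypothesis hM : forall i, is_matroid_rank (M i).
Hypothesis hkey : forall A : {set E}, #|A| <= 4 -> \sum_(i < k) M i A = hrho X A.

Let parex' := parex hM hkey.
Let par_uniq' := par_uniq hint hM hkey.
Let Hsub' := Hsub hint.
Let KEY' := KEY hM hkey.
Let par_common' := par_common hM hkey.
Let Lint2' := Lint2 hint.
Let Hpair' := Hpair hint.
Let GH' := GH hint.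

Notation Md := (Md M).
Notation pr := (pr M).
Notation H := (H X).

Definition Qb j i := [forall x in X j, forall y in X j, pr i x y].

Lemma QP j i x y : Qb j i -> x \in X j -> y \in X j -> pr i x y.
Proof. by move=> /forall_inP h hx hy; move/forall_inP: (h x hx); apply. Qed.

Lemma QI j i : (forall x y, x \in X j -> y \in X j -> pr i x y) -> Qb j i.
Proof. by move=> h; apply/forall_inP => x hx; apply/forall_inP => y hy; apply: h. Qed.

Lemma pr_Md i x y (S : {set E}) : x != y -> pr i x y -> x \in S -> y \in S -> 1 <= Md i S.
Proof.
move=> hxy; rewrite /pr (par_dfc (hM i)) // => h hx hy.
have : [set x; y] \subset S by apply/subsetP => z; rewrite !inE; case/orP => /eqP ->.
move/(dfc_mono (hM i)); rewrite /Md /=; lia.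
Qed.

Lemma card3 (a b c : E) : #|a |: (b |: [set c])| <= 3.
Proof. have := cardU1le a (b |: [set c]); have := cardU1le b [set c]; rewrite cards1; lia. Qed.
Lemma card4 (a b c d : E) : #|a |: (b |: (c |: [set d]))| <= 4.
Proof. have := cardU1le a (b |: (c |: [set d])); have := card3 b c d; lia. Qed.

Lemma H3 (T : {set E}) j1 j2 j3 : j1 != j2 -> j1 != j3 -> j2 != j3 ->
  1 <= #|T :&: X j1| - 1 -> 1 <= #|T :&: X j2| - 1 -> 1 <= #|T :&: X j3| - 1 -> 3 <= H T.
Proof.
move=> h12 h13 h23 t1 t2 t3.
apply: leq_trans (sum3 (fun j => #|T :&: X j| - 1) h12 h13 h23); rewrite /=; lia.
Qed.

Lemma L1 m i x y z : x \in X m -> y \in X m -> z \in X m -> x != y -> x != z -> y != z ->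
  pr i x y -> pr i x z.
Proof.
move=> hx hy hz hxy hxz hyz hp.
case: (boolP (pr i x z)) => // hn; exfalso.
have [b hb] := parex' hxz hx hz.
have [c hc] := parex' hyz hy hz.
have bi : b != i by apply/eqP => e; move/negP: hn; apply; rewrite -e; exact: hb.
have ci : c != i.
  apply/eqP => e; move/negP: hn; apply; rewrite -e in hp *; exact: (par_trans (hM c) hp hc).
have bc : b != c.
  apply/eqP => e; move: bi; rewrite (par_uniq' hxy hp (par_trans (hM b) hb _)) ?eqxx //.
  by rewrite e; apply: par_sym.
set T := x |: (y |: [set z]).
have sT : T \subset X m by apply/subsetP => u; rewrite !inE; case/or3P => /eqP ->.
have h1 := Hsub' sT.
have h2 := KEY' (leq_trans (card3 x y z) (isT : 3 <= 4)).
have yT : y \in T by rewrite !inE eqxx !orbT.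
have zT : z \in T by rewrite !inE eqxx !orbT.
have xT : x \in T by rewrite !inE eqxx.
have t1 := pr_Md hxy hp xT yT.
have t2 := pr_Md hxz hb xT zT.
have t3 := pr_Md hyz hc yT zT.
have := sum3 (fun i => Md i T) bc bi ci.
have := card3 x y z; rewrite -/T in h2 * => hc3 hs.
rewrite /Md /= in h2 t1 t2 t3 hs.
clear -h1 h2 t1 t2 t3 hc3 hs; clearbody T; lia.
Qed.

Lemma L1full m i x y : x \in X m -> y \in X m -> x != y -> pr i x y -> Qb m i.
Proof.
move=> hx hy hxy hp.
have hz : forall z, z \in X m -> pr i x z.
  move=> z hz; case: (eqVneq z x) => [->|hzx]; first exact: par_refl hp.
  case: (eqVneq z y) => [->|hzy] //.
  by apply: (L1 hx hy hz) => //; rewrite eq_sym.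
apply: QI => u v hu hv; apply: (par_trans (hM i) (par_sym (hz u hu)) (hz v hv)).
Qed.

Lemma TriExtra a u v w h A B C :
  u != v -> u != w -> v != w ->
  u \in X A -> v \in X A -> w \notin X A ->
  u \in X B -> w \in X B -> v \notin X B ->
  v \in X C -> w \in X C -> u \notin X C ->
  Qb A a -> Qb B a -> Qb C a -> h \in X A -> h != u -> h != v -> False.
Proof.
move=> huv huw hvw uA vA wA uB wB vB vC wC uC QA QB QC hA hu hv.
have AB : A != B by apply/eqP => e; move: wA; rewrite e wB.
have AC : A != C by apply/eqP => e; move: uC; rewrite -e uA.
have BC : B != C by apply/eqP => e; move: vB; rewrite e vC.
have hw : h != w by apply/eqP => e; move: wA; rewrite -e hA.
have puv := QP QA uA vA.
have puh := QP QA uA hA.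
have pvh := QP QA vA hA.
have puw := QP QB uB wB.
have pvw := QP QC vC wC.
have pwh : pr a w h := par_trans (hM a) (par_sym puw) puh.
have hwh : w != h by rewrite eq_sym.
have [p [wp hp]] := par_common' hwh pwh.
have hB : h \notin X B by apply/negP => hB; move: hu; rewrite (Lint2' AB uA uB hA hB) eqxx.
have hC : h \notin X C by apply/negP => hC; move: hv; rewrite (Lint2' AC vA vC hA hC) eqxx.
have pA : p != A by apply/eqP => e; move: wA; rewrite -e wp.
have pB : p != B by apply/eqP => e; move: hB; rewrite -e hp.
have pC : p != C by apply/eqP => e; move: hC; rewrite -e hp.
have hvh : v != h by rewrite eq_sym.
have huh : u != h by rewrite eq_sym.
apply: (@arith k (fun b => Md b (u |: (v |: [set w]))) (fun b => Md b (u |: (w |: [set h])))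
   (fun b => Md b (v |: (w |: [set h]))) (fun b => Md b (w |: (u |: (v |: [set h]))))
   (fun b => Md b (u |: (v |: [set h]))) (fun b => Md b [set u; w]) (fun b => Md b [set v; w])
   (fun b => Md b [set w; h]) a).
- rewrite /= KEY'; last by apply: leq_trans (card3 _ _ _) _.
  apply: (H3 AB AC BC).
  + by apply: (Hterm huv) => //; rewrite !inE eqxx ?orbT.
  + by apply: (Hterm huw) => //; rewrite !inE eqxx ?orbT.
  + by apply: (Hterm hvw) => //; rewrite !inE eqxx ?orbT.
- rewrite /= KEY'; last by apply: leq_trans (card3 _ _ _) _.
  apply: (H3 AB (_ : A != p) (_ : B != p)); rewrite 1?eq_sym //.
  + by apply: (Hterm huh) => //; rewrite !inE eqxx ?orbT.
  + by apply: (Hterm huw) => //; rewrite !inE eqxx ?orbT.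
  + by apply: (Hterm hwh) => //; rewrite !inE eqxx ?orbT.
- rewrite /= KEY'; last by apply: leq_trans (card3 _ _ _) _.
  apply: (H3 AC (_ : A != p) (_ : C != p)); rewrite 1?eq_sym //.
  + by apply: (Hterm hvh) => //; rewrite !inE eqxx ?orbT.
  + by apply: (Hterm hvw) => //; rewrite !inE eqxx ?orbT.
  + by apply: (Hterm hwh) => //; rewrite !inE eqxx ?orbT.
- rewrite /= KEY' ?card4 //.
  have wT : w \notin u |: (v |: [set h]) by rewrite !inE; neqs.
  have sT : u |: (v |: [set h]) \subset X A by apply/subsetP => z; rewrite !inE; case/or3P => /eqP ->.
  apply: leq_trans (GH' wT) _; have t2 := Hsub' sT; have t3 := card3 u v h; clear -t2 t3; lia.
- rewrite /= KEY'; last by apply: leq_trans (card3 _ _ _) _.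
  have sT : u |: (v |: [set h]) \subset X A by apply/subsetP => z; rewrite !inE; case/or3P => /eqP ->.
  have t2 := Hsub' sT; have t3 := card3 u v h; clear -t2 t3; lia.
- by rewrite /= KEY' ?cards2 ?Hpair' //; case: (_ != _).
- by rewrite /= KEY' ?cards2 ?Hpair' //; case: (_ != _).
- by rewrite /= KEY' ?cards2 ?Hpair' //; case: (_ != _).
- by apply: (pr_Md huw puw); rewrite !inE eqxx ?orbT.
- by apply: (pr_Md hvw pvw); rewrite !inE eqxx ?orbT.
- by apply: (pr_Md hwh pwh); rewrite !inE eqxx ?orbT.
- rewrite /=.
  have uT : u \notin v |: [set h] by rewrite !inE; neqs.
  case/and3P: (par_sym puv) => /eqP e1 /eqP e2 /eqP e3.
  have hl : M a (u |: (v |: [set h])) <= M a (v |: [set h]).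
    by apply: (Lpar (hM a) (y := v)); rewrite ?e1 ?e3 // !inE eqxx.
  have t1 := dfc_U1_par (hM a) uT e2 hl.
  have t2 : 1 <= Md a (v |: [set h]) by apply: (pr_Md hvh pvh); rewrite !inE eqxx ?orbT.
  rewrite /Md in t2 *; clear -t1 t2; lia.
- move=> b /=; have t1 := dfc_super (hM b) (u |: (v |: [set w])) (u |: (w |: [set h])).
  have s1 : (u |: (v |: [set w])) :|: (u |: (w |: [set h])) \subset w |: (u |: (v |: [set h])) by ssub.
  have s2 : (u |: (v |: [set w])) :&: (u |: (w |: [set h])) \subset [set u; w] by ssub.
  have t2 := dfc_mono (hM b) s1; have t3 := dfc_mono (hM b) s2; rewrite /Md; clear -t1 t2 t3; lia.
- move=> b /=; have t1 := dfc_super (hM b) (u |: (v |: [set w])) (v |: (w |: [set h])).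
  have s1 : (u |: (v |: [set w])) :|: (v |: (w |: [set h])) \subset w |: (u |: (v |: [set h])) by ssub.
  have s2 : (u |: (v |: [set w])) :&: (v |: (w |: [set h])) \subset [set v; w] by ssub.
  have t2 := dfc_mono (hM b) s1; have t3 := dfc_mono (hM b) s2; rewrite /Md; clear -t1 t2 t3; lia.
- move=> b /=; have t1 := dfc_super (hM b) (u |: (w |: [set h])) (v |: (w |: [set h])).
  have s1 : (u |: (w |: [set h])) :|: (v |: (w |: [set h])) \subset w |: (u |: (v |: [set h])) by ssub.
  have s2 : (u |: (w |: [set h])) :&: (v |: (w |: [set h])) \subset [set w; h] by ssub.
  have t2 := dfc_mono (hM b) s1; have t3 := dfc_mono (hM b) s2; rewrite /Md; clear -t1 t2 t3; lia.
- by move=> b /=; have t1 := dfc_U1 (hM b) w (u |: (v |: [set h])); rewrite /Md; clear -t1; lia.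
Qed.

End Hyp3.


Lemma one (T : finType) (A : {set T}) e : #|A| <= 1 -> e \in A -> A = [set e].
Proof. by move=> hA he; apply/eqP; rewrite eq_sym eqEcard sub1set he cards1. Qed.

Section Hyp4.
Variable E : finType.
Variable n : nat.
Variable X : 'I_n -> {set E}.
Variable k : nat.
Variable M : 'I_k -> {set E} -> nat.
Hypothesis hne : forall i, X i != set0.
Hypothesis hinj : injective X.
Hypothesis hint : forall i j : 'I_n, i != j -> #|X i :&: X j| <= 1.
Hypothesis htri : ~ (exists a b c : E, [/\ a != b, a != c, b != c &
        [/\ exists i, X i = [set a; b], exists i, X i = [set a; c] &
            exists i, X i = [set b; c]]]).
Hypothesis hM : forall i, is_matroid_rank (M i).
Hypothesis hkey : forall A : {set E}, #|A| <= 4 -> \sum_(i < k) M i A = hrho X A.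

Let parex' := parex hM hkey.
Let KEY' := KEY hM hkey.
Let par_common' := par_common hM hkey.
Let Lint2' := Lint2 hint.
Let Hpair' := Hpair hint.
Let QP' := @QP E n X k M.
Let QI' := @QI E n X k M.
Let L1full' := L1full hint hM hkey.
Let TriExtra' := TriExtra hint hM hkey.

Notation Md := (Md M).
Notation pr := (pr M).
Notation Qb := (Qb X M).

Lemma L2 j l e a : j != l -> e \in X j -> e \in X l -> 1 < #|X j| -> 1 < #|X l| ->
  Qb j a -> Qb l a -> False.
Proof.
move=> jl ej el cj cl Qj Ql.
have [f [fj fe]] := other e cj.
have [g [gl ge]] := other e cl.
have fl : f \notin X l by apply/negP => fl; move: fe; rewrite (Lint2' jl ej el fj fl) eqxx.
have gj : g \notin X j by apply/negP => gj; move: ge; rewrite (Lint2' jl ej el gj gl) eqxx.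
have fg : f != g by apply/eqP => e'; move: gj; rewrite -e' fj.
have pfg : pr a f g := par_trans (hM a) (QP' Qj fj ej) (QP' Ql el gl).
have [m [fm gm]] := par_common' fg pfg.
have em : e \notin X m.
  apply/negP => em; case: (eqVneq m j) => [mj|mj].
    by move: gj; rewrite -mj gm.
  by move: fe; rewrite (Lint2' mj em ej fm fj) eqxx.
have Qm := L1full' fm gm fg pfg.
have ef : e != f by rewrite eq_sym.
have eg : e != g by rewrite eq_sym.
have gf : g != f by rewrite eq_sym.
have ge' : g != e by [].
case: (ltnP 2 #|X j|) => [cj2|cj2].
  have [h [hj he hf]] := third e f cj2.
  exact: (TriExtra' ef eg fg ej fj gj el gl fl fm gm em Qj Ql Qm hj he hf).
case: (ltnP 2 #|X l|) => [cl2|cl2].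
  have [h [hl he hg]] := third e g cl2.
  exact: (TriExtra' eg ef gf el gl fl ej fj gj gm fm em Ql Qj Qm hl he hg).
case: (ltnP 2 #|X m|) => [cm2|cm2].
  have [h [hm hf hg]] := third f g cm2.
  exact: (TriExtra' fg fe ge' fm gm em fj ej gj gl el fl Qm Qj Ql hm hf hg).
apply: htri; exists e, f, g; split => //; split.
- by exists j; apply: two.
- by exists l; apply: two.
- by exists m; apply: two.
Qed.

Definition good j i := Qb j i &&
  [forall l, ((l != j) && (X l :&: X j != set0) && (1 < #|X l|)) ==> ~~ Qb l i].

Lemma good_ex j : exists i, good j i.
Proof.
case: (ltnP 1 #|X j|) => cj.
  case/card_gt1P: (cj) => x [y [hx hy hxy]].
  have [i hi] := parex' hxy hx hy.
  have Qi := L1full' hx hy hxy hi.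
  exists i; rewrite /good Qi /=.
  apply/forallP => l; apply/implyP => /andP[/andP[lj /set0Pn [e he]] cl].
  move: he; rewrite inE => /andP[el ej].
  apply/negP => Ql; exact: (L2 lj el ej cl cj Ql Qi).
have [e Xe] : exists e, X j = [set e].
  apply/cards1P; rewrite eqn_leq cj card_gt0; exact: hne.
pose D := [set l | e \in X l].
pose N := [set i | M i [set e] == 1].
pose L := [set l | (l != j) && (e \in X l) && (1 < #|X l|)].
pose U := [set i | [exists l, (l \in L) && Qb l i]].
have hN : #|N| = #|D|.
  have e1 : \sum_i M i [set e] = #|D|.
    rewrite hkey ?cards1 // /hrho -sum_ind; apply: eq_bigr => l _.
    by rewrite card1I; case: (e \in X l).
  rewrite -e1 -sum_ind; apply: eq_bigr => i _.
  by have := r1 (hM i) e; case: (M i [set e]) => [|[|]].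
have hU : #|U| <= #|L|.
  have -> : #|U| = \sum_i (i \in U : nat) by rewrite sum_ind; apply: eq_card => i; rewrite inE.
  apply: (@leq_trans (\sum_i \sum_(l in L) (Qb l i : nat))).
    apply: leq_sum => i _; case: (boolP (i \in U)) => // hiU.
    move: hiU; rewrite inE => /existsP [l /andP [hl Ql]].
    by rewrite (bigD1 l) //= Ql; lia.
  rewrite exchange_big /= -sum1_card; apply: leq_sum => l; rewrite inE => /andP[_ cl].
  case/card_gt1P: cl => x [y [hx hy hxy]].
  apply: (@leq_trans (\sum_i Md i [set x; y])).
    apply: leq_sum => i _; case: (boolP (Qb l i)) => // Q.
    by apply: (pr_Md hM hxy (QP' Q hx hy)); rewrite !inE eqxx ?orbT.
  by rewrite KEY' ?Hpair' // cards2; case: (x != y).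
have hL : #|L| < #|D|.
  have sL : L \subset D :\ j.
    by apply/subsetP => l; rewrite !inE => /andP[/andP[-> ->] _].
  have := subset_leq_card sL; rewrite (cardsD1 j D) inE Xe set11; lia.
have : ~~ (N \subset U) by apply/negP => sNU; have := subset_leq_card sNU; lia.
case/subsetPn => i hiN hiU; exists i.
rewrite /good; apply/andP; split.
  apply: QI' => x y; rewrite Xe !inE => /eqP-> /eqP->.
  by move: hiN; rewrite inE /pr /par setUid => ->.
apply/forallP => l; apply/implyP => /andP[/andP[lj /set0Pn [z hz]] cl].
move: hz; rewrite Xe !inE => /andP[zl /eqP ze]; subst z.
apply/negP => Ql; move/negP: hiU; apply; rewrite inE; apply/existsP; exists l.
by rewrite Ql andbT inE lj zl cl.
Qed.

Theorem color : exists c : 'I_n -> 'I_k, (forall j l, line_adj X j l -> c j != c l) /\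
   c1 c + 2 * c2plus c <= \sum_t M t setT.
Proof.
pose c := fun j => xchoose (good_ex j).
have hc : forall j, good j (c j) := fun j => xchooseP (good_ex j).
have hp : forall j l, line_adj X j l -> c j != c l.
  move=> j l /andP[jl /set0Pn [e he]]; move: he; rewrite inE => /andP[ej el].
  apply/eqP => cjl.
  have gj := hc j; have gl := hc l; rewrite cjl in gj.
  case/andP: gj => Qj /forallP Fj; case/andP: gl => Ql /forallP Fl.
  case: (ltnP 1 #|X l|) => cl.
    have H1 : (l != j) && (X l :&: X j != set0) && (1 < #|X l|).
      rewrite cl andbT (eq_sym l) jl /=; apply/set0Pn; exists e; by rewrite inE el ej.
    by move: (implyP (Fj l) H1); rewrite Ql.
  case: (ltnP 1 #|X j|) => cj.
    have H1 : (j != l) && (X j :&: X l != set0) && (1 < #|X j|).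
      rewrite cj andbT jl /=; apply/set0Pn; exists e; by rewrite inE el ej.
    by move: (implyP (Fl j) H1); rewrite Qj.
  by move: jl; rewrite (hinj (etrans (one cj ej) (esym (one cl el)))) eqxx.
exists c; split => //.
rewrite /c1 /c2plus -!sum_ind mul2n -addnn -!big_split /=.
apply: leq_sum => t _; rewrite /=.
case: (ltnP 1 #|[set i | c i == t]|) => h2.
  have -> : (#|[set i | c i == t]| == 1) = false by apply/negbTE; rewrite neq_ltn h2 orbT.
  case/card_gt1P: h2 => j [l [hj hl jl]]; rewrite !inE in hj hl.
  move/eqP: hj => hj; move/eqP: hl => hl.
  have disj : X j :&: X l = set0.
    apply/eqP; apply/negPn/negP => hn.
    by have := hp j l; rewrite /line_adj jl hn hj hl eqxx => /(_ isT).
  have [x hx] := set0Pn _ (hne j); have [y hy] := set0Pn _ (hne l).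
  have yj : y \notin X j by apply/negP => yj; move: disj => /setP /(_ y); rewrite !inE yj hy.
  have hxy : x != y by apply/eqP => e; move: yj; rewrite -e hx.
  have gj := hc j; rewrite hj in gj; case/andP: gj => Qj /forallP Fj.
  have gl := hc l; rewrite hl in gl; case/andP: gl => Ql _.
  have := QP' Qj hx hx; rewrite /pr /par => /and3P[/eqP ex _ _].
  have := QP' Ql hy hy; rewrite /pr /par => /and3P[/eqP ey _ _].
  have sT : [set x; y] \subset setT by apply: subsetT.
  have := rmono (hM t) sT.
  case: (leqP 2 (M t [set x; y])) => h; first by lia.
  exfalso.
  have hge : M t [set x] <= M t [set x; y] by apply: (rmono (hM t)); rewrite sub1set !inE eqxx.
  have pxy : pr t x y by rewrite /pr /par ex ey eqxx /=; apply/eqP; lia.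
  have [m [xm ym]] := par_common' hxy pxy.
  have mj : m != j by apply/eqP => e; move: yj; rewrite -e ym.
  have cm : 1 < #|X m| by apply/card_gt1P; exists x, y.
  have Qm := L1full' xm ym hxy pxy.
  have H1 : (m != j) && (X m :&: X j != set0) && (1 < #|X m|).
    rewrite cm andbT mj /=; apply/set0Pn; exists x; by rewrite inE xm hx.
  by move: (implyP (Fj m) H1); rewrite Qm.
case: (boolP (#|[set i | c i == t]| == 1)) => //= h1.
have : 0 < #|[set i | c i == t]| by rewrite (eqP h1).
case/card_gt0P => j; rewrite inE => /eqP hj.
have [x hx] := set0Pn _ (hne j).
have gj := hc j; rewrite hj in gj; case/andP: gj => Qj _.
have := QP' Qj hx hx; rewrite /pr /par => /and3P[/eqP ex _ _].
have := rmono (hM t) (subsetT [set x]); lia.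
Qed.

End Hyp4.

Unset Implicit Arguments. Set Strict Implicit.

Lemma bigmin_le (I : eqType) (r : seq I) (P : pred I) (F : I -> nat) d x :
  x \in r -> P x -> \big[minn/d]_(i <- r | P i) F i <= F x.
Proof.
elim: r => // a r IH; rewrite inE big_cons => /orP[/eqP<-|xr] Px.
  by rewrite Px geq_minl.
case: (P a); last exact: IH.
exact: leq_trans (geq_minr _ _) (IH xr Px).
Qed.

Theorem corollary2p12 (E : finType) (n : nat) (X : 'I_n -> {set E}) (s : nat) :
  (forall i, X i != set0) ->
  injective X ->
  (forall i j : 'I_n, i != j -> #|X i :&: X j| <= 1) ->
  ~ (exists a b c : E, [/\ a != b, a != c, b != c &
        [/\ exists i, X i = [set a; b], exists i, X i = [set a; c] &
            exists i, X i = [set b; c]]]) ->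
  (forall A : {set E}, #|A| <= 4 -> hrho X A <= s) ->
  s < hrho X setT ->
  (forall k, decomposable (truncation (hrho X) s) k ->
     exists c : 'I_n -> 'I_k, proper_coloring X c /\ c1 c + 2 * c2plus c <= s) /\
  (s < chi_line X -> indecomposable (truncation (hrho X) s)).
Proof.
move=> hne hinj hint htri hs hsE.
have part1 : forall k, decomposable (truncation (hrho X) s) k ->
     exists c : 'I_n -> 'I_k, proper_coloring X c /\ c1 c + 2 * c2plus c <= s.
  move=> k [M [hM hMs]].
  have hkey : forall A : {set E}, #|A| <= 4 -> \sum_(i < k) M i A = hrho X A.
    by move=> A hA; rewrite -hMs /truncation; apply/minn_idPl; exact: hs.
  have hT : \sum_(i < k) M i setT = s.
    by rewrite -hMs /truncation; apply/minn_idPr; exact: ltnW.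
  have [c [hp hcnt]] := color hne hinj hint htri hM hkey.
  by exists c; split => //; rewrite -hT.
split => // hchi k hdec.
have [c [hp hcnt]] := part1 k hdec.
have npos : 0 < n.
  case: (posnP n) => // n0; move: hsE; rewrite /hrho; clear -n0.
  by subst n; rewrite big_ord0.
pose j0 : 'I_n := Ordinal npos.
pose U := c @: [set: 'I_n].
have hU0 : c j0 \in U by apply: imset_f; rewrite in_setT.
have hcol : colorable X #|U|.
  apply/existsP; exists [ffun j => enum_rank_in hU0 (c j)].
  apply/forallP => i; apply/forallP => j; apply/implyP => hij; rewrite !ffunE.
  apply/negP => /eqP e; have := hp i j hij; apply/negP/negPn/eqP.
  have := congr1 enum_val e; rewrite !enum_rankK_in //; apply: imset_f; exact: in_setT.
have hUn : #|U| < n.+1.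
  by have := leq_imset_card c [set: 'I_n]; rewrite cardsT card_ord.
have hchiU : chi_line X <= #|U|.
  rewrite /chi_line; apply: (@bigmin_le _ _ _ _ _ (Ordinal hUn)) => //; exact: mem_index_enum.
have hUc : #|U| <= c1 c + c2plus c.
  have sU : U \subset [set t | #|[set i | c i == t]| == 1] :|: [set t | 1 < #|[set i | c i == t]|].
    apply/subsetP => t /imsetP [j _ ->]; rewrite !inE.
    have : 0 < #|[set i | c i == c j]| by apply/card_gt0P; exists j; rewrite inE.
    by case: #|_| => [|[|]].
  apply: (leq_trans (subset_leq_card sU)); rewrite cardsU; exact: leq_subr.
lia.
Qed.
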